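(* Let $\mathcal S$ be the family of all subsets of $[n]$ of size at most $s$ (single-item $s$-unit auctions). Then for every $m\ge1$ and every sequence of valuation profiles $\vec v_1,\dots,\vec v_T\in[0,1]^n$, \[ \max_{\vec r\in\mathcal I}\sum_{t=1}^T\mathrm{Rev}(\vec r,\vec v_t)-\max_{\vec r\in\mathcal I_m}\sum_{t=1}^T\mathrm{Rev}(\vec r,\vec v_t)\le\frac{2Ts}{m}. \]
   Context: Setting: $n$ bidders with valuation profile $\vec v\in[0,1]^n$; feasible family $\mathcal S$ of sets of bidders that can be served. A VCG auction with bidder-specific reserves $\vec r$: bidders with $v_i<r_i$ are removed; if none remain nothing is allocated; otherwise a welfare-maximizing feasible set among the remaining bidders is served, and each served bidder pays the larger of $r_i$ and his VCG payment (for the $s$-unit case, the highest value among remaining bidders who are not served, or $0$ if all remaining bidders are served). $\mathrm{Rev}(\vec r,\vec v)$ is the total payment. $\mathcal I$ is the class of all such auctions with $\vec r\in[0,1]^n$, and $\mathcal I_m\subseteq\mathcal I$ those with every $r_i\in\{1/m,2/m,\dots,1\}$. *)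

(* Defs.v *)
From HB Require Import structures.
From mathcomp Require Import all_boot all_order all_algebra.
Set Implicit Arguments. Unset Strict Implicit. Unset Printing Implicit Defensive.
Import Order.TTheory GRing.Theory Num.Theory.
Local Open Scope ring_scope.

Section Auction.
Variables (R : realFieldType) (n s : nat).

Definition remaining (r v : 'I_n -> R) (i : 'I_n) : bool := r i <= v i.

Definition beats (v : 'I_n -> R) (j i : 'I_n) : bool :=
  (v i < v j) || ((v j == v i) && (j < i)%N).

(* served = the (at most) s best remaining bidders: a welfare-maximizing
   feasible set (|S| <= s) among remaining bidders *)
Definition served (r v : 'I_n -> R) (i : 'I_n) : bool :=
  remaining r v i && (#|[pred j | remaining r v j && beats v j i]| < s)%N.

Definition vcg_price (r v : 'I_n -> R) : R :=
  \big[Num.max/0]_(j | remaining r v j && ~~ served r v j) v j.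

Definition Rev (r v : 'I_n -> R) : R :=
  \sum_(i | served r v i) Num.max (r i) (vcg_price r v).

End Auction.

Definition in_Im (R : realFieldType) (n m : nat) (r : 'I_n -> R) : Prop :=
  forall i, exists k : nat, (1 <= k <= m)%N /\ r i = k%:R / m%:R.

(* Main.v *)
Require Import Defs.
From HB Require Import structures.
From mathcomp Require Import all_boot all_order all_algebra.
From mathcomp Require Import ring lra zify.
Import Order.TTheory GRing.Theory Num.Theory.
Local Open Scope ring_scope.
Set Implicit Arguments. Unset Strict Implicit.

Section L.
Variables (R : realFieldType) (n s : nat).
Implicit Types (r v : 'I_n -> R) (i j k : 'I_n).

Lemma beats_irr v i : beats v i i = false.
Proof. by rewrite /beats ltxx eqxx ltnn. Qed.

Lemma beats_trans v i j k : beats v i j -> beats v j k -> beats v i k.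
Proof.
rewrite /beats => /orP[h1|/andP[/eqP e1 l1]] /orP[h2|/andP[/eqP e2 l2]].
- by rewrite (lt_trans h2 h1).
- by rewrite -e2 h1.
- by rewrite e1 h2.
- by rewrite e1 e2 eqxx (ltn_trans l1 l2) orbT.
Qed.

Lemma beats_total v i j : i != j -> beats v i j || beats v j i.
Proof.
move=> ne; rewrite /beats; case: (ltgtP (v j) (v i)) => e; rewrite ?orbT //.
rewrite /=; case: (ltngtP i j) => e'; rewrite ?orbT //.
by move: ne; rewrite (val_inj e') eqxx.
Qed.

Definition bts r v i := [pred j | remaining r v j && beats v j i].

Lemma served_up r v i j : served s r v i -> remaining r v j -> beats v j i ->
  served s r v j.
Proof.
rewrite /served => /andP[Ri ci] Rj bji; rewrite Rj /=.
apply: leq_ltn_trans ci; apply: subset_leq_card.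
apply/subsetP => k; rewrite !inE => /andP[-> /beats_trans]; exact.
Qed.

Lemma served_rem r v i : served s r v i -> remaining r v i.
Proof. by case/andP. Qed.

Lemma served_le r v i j : served s r v i -> remaining r v j ->
  ~~ served s r v j -> v j <= v i.
Proof.
move=> Si Rj nSj; rewrite leNgt; apply/negP => lt.
by move: nSj; rewrite (served_up Si Rj) // /beats lt.
Qed.


Lemma bts_lt r v i j : beats v i j -> remaining r v i -> (#|bts r v i| < #|bts r v j|)%N.
Proof.
move=> bij Ri; apply: proper_card; apply/properP; split.
  apply/subsetP => k; rewrite !inE => /andP[-> /beats_trans]; exact.
by exists i; rewrite !inE ?Ri ?bij // beats_irr andbF.
Qed.

Lemma card_served_le r v : (#|[pred i | served s r v i]| <= s)%N.
Proof.
case: (pickP [pred i | served s r v i]) => [i0 Si0|h]; last first.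
  by rewrite (eq_card0 h).
case: (@arg_maxnP _ i0 [pred i | served s r v i] (fun i => #|bts r v i|) Si0)
  => i Si imax.
have sub : [predD1 [pred i | served s r v i] & i] \subset bts r v i.
  apply/subsetP => j; rewrite !inE => /andP[nji Sj].
  rewrite (served_rem Sj) /=.
  case/orP: (beats_total v nji) => // bij.
  have := imax j Sj => /= h; exfalso; move: h; rewrite leqNgt => /negP; apply.
  by apply: bts_lt => //; exact: served_rem Si.
have h1 := subset_leq_card sub.
have e := cardD1 i [pred i | served s r v i].
have c : (#|bts r v i| < s)%N by case/andP: Si.
have ii : i \in [pred i | served s r v i] by [].
rewrite ii in e; rewrite e; move: h1 c; rewrite /= add1n => h1 c; exact: (leq_ltn_trans h1 c).
Qed.

Lemma served_all_or r v :
  (forall i, remaining r v i -> served s r v i) \/ (s <= #|[pred i | served s r v i]|)%N.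
Proof.
set P := [pred j | remaining r v j && ~~ served s r v j].
case: (pickP P) => [j0 Pj0|h]; last first.
  left => i Ri; have := h i; rewrite /P /= Ri /=; by move/negbFE.
right.
case: (@arg_minnP _ j0 P (fun i => #|bts r v i|) Pj0) => j /andP[Rj nSj] jmin.
have sub : bts r v j \subset [pred i | served s r v i].
  apply/subsetP => b; rewrite !inE => /andP[Rb bbj].
  apply/negPn/negP => nSb.
  have := jmin b; rewrite /P /= Rb nSb /= => /(_ isT).
  by rewrite leqNgt (bts_lt bbj Rb).
apply: leq_trans (subset_leq_card sub).
by move: nSj; rewrite /served Rj /= -leqNgt.
Qed.

Lemma vcg_ge0 r v : 0 <= vcg_price s r v.
Proof. exact: bigmax_ge_id. Qed.

Lemma le_vcg r v j : remaining r v j -> ~~ served s r v j -> v j <= vcg_price s r v.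
Proof. by move=> Rj nSj; apply: le_bigmax_cond; rewrite Rj. Qed.

Lemma vcg_le r v i : (forall j, 0 <= v j) -> served s r v i -> vcg_price s r v <= v i.
Proof.
move=> v0 Si; apply: bigmax_le; first exact: v0.
move=> j /andP[Rj nSj]; exact: (served_le Si Rj nSj).
Qed.

Lemma pay_le r v i : (forall j, 0 <= v j) -> served s r v i ->
  Num.max (r i) (vcg_price s r v) <= v i.
Proof.
move=> v0 Si; rewrite ge_max (vcg_le v0 Si) andbT.
by have := served_rem Si.
Qed.

Lemma sum_constP (P : pred 'I_n) (x : R) : \sum_(i | P i) x = x *+ #|P|.
Proof. by rewrite -sumr_const. Qed.

Lemma cardPQ (P Q : pred 'I_n) :
  (#|[pred i | P i && Q i]| + #|[pred i | P i && ~~ Q i]|)%N = #|[pred i | P i]|.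
Proof.
rewrite -(cardID Q [pred i | P i]); congr (_ + _)%N; apply: eq_card => i; rewrite !inE //.
by rewrite andbC.
Qed.

Definition pay r v i := Num.max (r i) (vcg_price s r v).

Lemma RevE r v : Rev s r v = \sum_(i | served s r v i) pay r v i.
Proof. by []. Qed.

Lemma stage1 r r' v c : (forall j, 0 <= v j) -> 0 <= c ->
  (forall i, r' i <= r i) -> (forall i, r i <= r' i + c) ->
  Rev s r v - Rev s r' v <= s%:R * c.
Proof.
move=> v0 c0 le1 le2.
have Rsub i : remaining r v i -> remaining r' v i.
  by rewrite /remaining => h; apply: le_trans h.
have S'R i : remaining r v i -> served s r' v i -> served s r v i.
  move=> Ri /andP[_ ci]; rewrite /served Ri /=; apply: leq_ltn_trans ci.
  apply: subset_leq_card; apply/subsetP => j; rewrite !inE => /andP[Rj ->].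
  by rewrite Rsub.
have pp : vcg_price s r v <= vcg_price s r' v.
  apply: bigmax_le; first exact: vcg_ge0.
  move=> j /andP[Rj nSj]; apply: le_vcg; first exact: Rsub.
  by apply/negP => /(S'R _ Rj); apply/negP.
set p' := vcg_price s r' v.
have p0 : 0 <= p' := vcg_ge0 _ _.
set S := served s r v; set S' := served s r' v.
have cS : (#|[pred i | S i]| <= #|[pred i | S' i]|)%N.
  case: (served_all_or r' v) => [all|].
    apply: subset_leq_card; apply/subsetP => i; rewrite !inE => Si.
    exact/all/Rsub/served_rem.
  by apply: leq_trans; apply: card_served_le.
have cS1 := cardPQ S S'; have cS2 := cardPQ S' S.
have cSs : (#|[pred i | S i]| <= s)%N := card_served_le r v.
have cS3 : #|[pred i | S i && S' i]| = #|[pred i | S' i && S i]|.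
  by apply: eq_card => i; rewrite !inE andbC.
have E1 : Rev s r v = \sum_(i | S i && S' i) pay r v i + \sum_(i | S i && ~~ S' i) pay r v i.
  by rewrite RevE (bigID S').
have E2 : Rev s r' v = \sum_(i | S' i && S i) pay r' v i + \sum_(i | S' i && ~~ S i) pay r' v i.
  by rewrite RevE (bigID S).
rewrite E1 E2.
have A1 : \sum_(i | S i && S' i) pay r v i <=
          \sum_(i | S' i && S i) pay r' v i + c *+ #|[pred i | S i && S' i]|.
  rewrite (@eq_bigl _ _ _ _ _ _ (fun i => S i && S' i) (pay r' v)); last first.
    by move=> i; rewrite andbC.
  rewrite -sum_constP -big_split /=.
  apply: ler_sum => i /andP[_ Si]; rewrite /pay.
  rewrite ge_max; apply/andP; split.
    by apply: le_trans (le2 i) _; rewrite lerD2r le_max lexx.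
  by apply: le_trans pp _; rewrite -[X in X <= _]addr0 lerD // le_max lexx orbT.
have A2 : \sum_(i | S i && ~~ S' i) pay r v i <= p' *+ #|[pred i | S i && ~~ S' i]|.
  rewrite -sum_constP; apply: ler_sum => i /andP[Si nS'i].
  apply: le_trans (pay_le v0 Si) _; apply: le_vcg => //.
  exact/Rsub/served_rem.
have A3 : p' *+ #|[pred i | S' i && ~~ S i]| <= \sum_(i | S' i && ~~ S i) pay r' v i.
  rewrite -sum_constP; apply: ler_sum => i _; by rewrite /pay le_max lexx orbT.
have A4 : p' *+ #|[pred i | S i && ~~ S' i]| <= p' *+ #|[pred i | S' i && ~~ S i]|.
  rewrite -!(mulr_natr p') ler_wpM2l // ler_nat.
  move: cS cS1 cS2 cS3; lia.
have A5 : c *+ #|[pred i | S i && S' i]| <= s%:R * c.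
  rewrite -(mulr_natl c) ler_wpM2r // ler_nat.
  move: cSs cS1; lia.
lra.
Qed.

Lemma beats_le v b i : beats v b i -> v i <= v b.
Proof. by rewrite /beats => /orP[/ltW //|/andP[/eqP -> _]]. Qed.

Lemma stage2 r'' r' v c : (forall j, 0 <= v j) -> 0 <= c ->
  (forall i, r' i = Num.max (r'' i) c) ->
  Rev s r'' v - Rev s r' v <= s%:R * c.
Proof.
move=> v0 c0 er.
have R'sub i : remaining r' v i -> remaining r'' v i.
  by rewrite /remaining er ge_max => /andP[].
have RemC i : remaining r' v i -> c <= v i.
  by rewrite /remaining er ge_max => /andP[].
have Rback j : remaining r'' v j -> c <= v j -> remaining r' v j.
  by rewrite /remaining er ge_max => -> ->.
have nRlt j : remaining r'' v j -> ~~ remaining r' v j -> v j < c.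
  by move=> Rj; apply: contraNlt => h; apply: Rback.
have S1 i : remaining r' v i -> served s r'' v i -> served s r' v i.
  move=> Ri /andP[_ ci]; rewrite /served Ri /=; apply: leq_ltn_trans ci.
  apply: subset_leq_card; apply/subsetP => j; rewrite !inE => /andP[Rj ->].
  by rewrite R'sub.
have S2 i : served s r' v i -> served s r'' v i.
  move=> /andP[Ri ci]; rewrite /served R'sub //=; apply: leq_ltn_trans ci.
  apply: subset_leq_card; apply/subsetP => j; rewrite !inE => /andP[Rj bj].
  by rewrite bj Rback // (le_trans (RemC _ Ri)) // beats_le.
set S := served s r'' v; set R' := remaining r' v.
have E1 : Rev s r'' v = \sum_(i | S i && R' i) pay r'' v i + \sum_(i | S i && ~~ R' i) pay r'' v i.
  by rewrite RevE (bigID R').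
have E2 : Rev s r' v = \sum_(i | S i && R' i) pay r' v i.
  rewrite RevE; apply: eq_bigl => i.
  case Ri: (R' i); rewrite ?andbT ?andbF.
    by apply/idP/idP => [/S2|/S1]; [|apply].
  by apply/negP => /served_rem; move: Ri; rewrite /R' => ->.
have B1 : \sum_(i | S i && R' i) pay r'' v i <= \sum_(i | S i && R' i) pay r' v i.
  apply: ler_sum => i /andP[Si Ri]; rewrite /pay ge_max; apply/andP; split.
    by rewrite le_max er le_max lexx.
  apply: bigmax_le; first by rewrite le_max vcg_ge0 orbT.
  move=> j /andP[Rj nSj]; case Rj': (R' j).
    rewrite le_max; apply/orP; right; apply: le_vcg => //.
    by apply: contra nSj; apply: S2.
  rewrite le_max; apply/orP; left; rewrite er le_max; apply/orP; right.
  by apply: ltW; apply: nRlt => //; move: Rj'; rewrite /R' => ->.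
have B2 : \sum_(i | S i && ~~ R' i) pay r'' v i <= c *+ #|[pred i | S i && ~~ R' i]|.
  rewrite -sum_constP; apply: ler_sum => i /andP[Si nRi].
  apply: le_trans (pay_le v0 Si) _; apply: ltW; apply: nRlt => //.
  exact: served_rem.
have cS1 := cardPQ S R'.
have cSs : (#|[pred i | S i]| <= s)%N := card_served_le r'' v.
have B3 : c *+ #|[pred i | S i && ~~ R' i]| <= s%:R * c.
  rewrite -(mulr_natl c) ler_wpM2r // ler_nat.
  move: cSs cS1; lia.
rewrite E1 E2; lra.
Qed.
End L.

Lemma grid (R : realFieldType) (m : nat) : (0 < m)%N ->
  forall N x, 0 <= x -> x <= N%:R / m%:R :> R ->
  exists k, (k <= N)%N /\ k%:R / m%:R <= x /\ x <= k%:R / m%:R + 1 / m%:R.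
Proof.
move=> m0; elim=> [|N IH] x x0 xN.
  exists 0%N; split => //; rewrite mul0r in xN *; split => //.
  by apply: le_trans xN _; rewrite add0r divr_ge0.
case: (lerP x (N%:R / m%:R)) => h.
  by case: (IH x x0 h) => k [kN hk]; exists k; split => //; apply: leqW.
exists N; split => //; split; first exact: ltW.
apply: le_trans xN _; rewrite -mulrDl -natr1 //.
Qed.

Theorem mainTheorem6 (R : realFieldType) (n s m T : nat)
  (vs : 'I_T -> 'I_n -> R) :
  (1 <= m)%N ->
  (forall t i, 0 <= vs t i <= 1) ->
  forall r : 'I_n -> R, (forall i, 0 <= r i <= 1) ->
  exists r' : 'I_n -> R, in_Im m r' /\
    \sum_(t < T) Rev s r (vs t) - \sum_(t < T) Rev s r' (vs t)
      <= 2%:R * T%:R * s%:R / m%:R.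
Proof.
move=> m1 hv r hr.
have mpos : 0 < m%:R :> R by rewrite ltr0n.
set c : R := 1 / m%:R.
have c0 : 0 <= c by rewrite divr_ge0 // ltW.
have : forall i, exists k, (k <= m)%N /\ k%:R / m%:R <= r i /\ r i <= k%:R / m%:R + c.
  move=> i; case/andP: (hr i) => h0 h1; apply: grid => //.
  by rewrite divff // gt_eqF.
case/fin_all_exists => f hf.
pose r'' i : R := (f i)%:R / m%:R.
exists (fun i => (maxn (f i) 1)%:R / m%:R); split.
  move=> i; exists (maxn (f i) 1); split => //.
  by rewrite leq_max leqnn orbT /= geq_max m1 andbT; case: (hf i).
have er : forall i, (maxn (f i) 1)%:R / m%:R = Num.max (r'' i) c.
  move=> i; rewrite /r'' /c; case: (f i) => [|k].
    by rewrite /= mul0r max_r // divr_ge0 // ltW.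
  rewrite (maxn_idPl _) // max_l //.
  apply: ler_wpM2r; [by rewrite invr_ge0 ltW | idtac]. by rewrite ler1n.
have step t : Rev s r (vs t) - Rev s (fun i => (maxn (f i) 1)%:R / m%:R) (vs t) <= 2%:R * s%:R * c.
  have v0 j : 0 <= vs t j by case/andP: (hv t j).
  have h1 := stage1 s (r := r) (r' := r'') v0 c0.
  have h2 := stage2 s (r'' := r'') (r' := fun i => (maxn (f i) 1)%:R / m%:R) v0 c0 er.
  have h1' : Rev s r (vs t) - Rev s r'' (vs t) <= s%:R * c.
    apply: h1 => i; case: (hf i) => _ [a b] //.
  lra.
rewrite -sumrB; apply: le_trans (ler_sum _ (fun t _ => step t)) _.
rewrite sumr_const card_ord /c -[_ *+ T]mulr_natr; rewrite le_eqVlt; apply/orP; left; apply/eqP; ring.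
Qed.
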